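(* The local consequence relations $\vdash_{\mathcal{K}_{\omega\text{Ł}}}$ and $\vdash_{\mathcal{K}_{\text{Ł}}}$ coincide, whereas $\vdash_{4\mathcal{K}_{\omega\text{Ł}}}$ is strictly stronger than $\vdash_{4\mathcal{K}_{\text{Ł}}}$ (i.e. $\vdash_{4\mathcal{K}_{\text{Ł}}}\subsetneq\vdash_{4\mathcal{K}_{\omega\text{Ł}}}$).
   Context: $[0,1]_{\text{Ł}}$ is the standard MV-algebra on $[0,1]$ ($\wedge=\min$, $\vee=\max$, $a\cdot b=\max\{0,a+b-1\}$, $a\to b=\min\{1,1-a+b\}$); for $n\ge1$, $MV_n$ is its subalgebra on $\{0,\frac1n,\dots,1\}$. Modal formulas use $\wedge,\vee,\cdot,\to,0,1,\Box,\Diamond$. An $\mathbf{A}$-Kripke model is $\langle W,R,e\rangle$ with $W\ne\emptyset$, crisp $R\subseteq W^2$, $e$ valuing variables at worlds in $\mathbf{A}$, extended world-wise homomorphically and by $e(v,\Box\varphi)=\inf_{Rvw}e(w,\varphi)$, $e(v,\Diamond\varphi)=\sup_{Rvw}e(w,\varphi)$, these being required to exist (safe models). $\mathcal{K}_{\text{Ł}}$: all $[0,1]_{\text{Ł}}$-Kripke models; $\mathcal{K}_{\omega\text{Ł}}$: all safe Kripke models over some $MV_n$, $n\in\omega$; the prefix $4$ denotes restriction to transitive $R$. $\Gamma\vdash_{\mathcal{C}}\varphi$ (for finite $\Gamma$) means: for every model in $\mathcal{C}$ and world $v$, if all of $\Gamma$ has value $1$ at $v$ then $\varphi$ has value $1$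 at $v$. *)

(* Defs.v *)
From Stdlib Require Import Reals List.
From Coquelicot Require Import Coquelicot.
Open Scope R_scope.

Inductive form : Type :=
| Var : nat -> form
| And : form -> form -> form
| Or  : form -> form -> form
| Prod : form -> form -> form
| Imp : form -> form -> form
| Bot : form
| Top : form
| Box : form -> form
| Dia : form -> form.

(** Supremum / infimum in [0,1]: for a set S of reals lying in [0,1],
    [sup01 S] is sup S (and 0 = bottom of [0,1] if S is empty);
    [inf01 S] is inf S (and 1 = top of [0,1] if S is empty). *)
Definition sup01 (S : R -> Prop) : R := real (Lub_Rbar (fun x => x = 0 \/ S x)).
Definition inf01 (S : R -> Prop) : R := real (Glb_Rbar (fun x => x = 1 \/ S x)).

Definition luk_prod (a b : R) : R := Rmax 0 (a + b - 1).
Definition luk_imp (a b : R) : R := Rmin 1 (1 - a + b).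

Fixpoint eval {W : Type} (Rel : W -> W -> Prop) (e : nat -> W -> R)
    (phi : form) (v : W) : R :=
  match phi with
  | Var p => e p v
  | And a b => Rmin (eval Rel e a v) (eval Rel e b v)
  | Or a b => Rmax (eval Rel e a v) (eval Rel e b v)
  | Prod a b => luk_prod (eval Rel e a v) (eval Rel e b v)
  | Imp a b => luk_imp (eval Rel e a v) (eval Rel e b v)
  | Bot => 0
  | Top => 1
  | Box a => inf01 (fun x => exists w, Rel v w /\ x = eval Rel e a w)
  | Dia a => sup01 (fun x => exists w, Rel v w /\ x = eval Rel e a w)
  end.

Definition in_MV (n : nat) (x : R) : Prop :=
  exists k : nat, (k <= n)%nat /\ x = INR k / INR n.

Definition model_class := forall W : Type, (W -> W -> Prop) -> (nat -> W -> R) -> Prop.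

Definition transitive_rel {W : Type} (Rel : W -> W -> Prop) : Prop :=
  forall u v w, Rel u v -> Rel v w -> Rel u w.

Definition K_L : model_class :=
  fun W Rel e => forall p w, 0 <= e p w <= 1.

Definition K_omegaL : model_class :=
  fun W Rel e => exists n : nat, (1 <= n)%nat /\ forall p w, in_MV n (e p w).

Definition K4_L : model_class :=
  fun W Rel e => K_L W Rel e /\ transitive_rel Rel.

Definition K4_omegaL : model_class :=
  fun W Rel e => K_omegaL W Rel e /\ transitive_rel Rel.

Definition entails (C : model_class) (Gamma : list form) (phi : form) : Prop :=
  forall (W : Type) (Rel : W -> W -> Prop) (e : nat -> W -> R),
    C W Rel e ->
    forall v : W, (forall g, In g Gamma -> eval Rel e g v = 1) ->
      eval Rel e phi v = 1.

(* Main.v *)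
Require Import Defs.
From Stdlib Require Import Reals List Lra Lia ZArith QArith Qreals Classical ClassicalEpsilon FunctionalExtensionality Cantor.
From Coquelicot Require Import Coquelicot.
Require Import Defs.
Open Scope R_scope.

Lemma sup01_spec (S : R -> Prop) (B : R) :
  (forall x, S x -> x <= B) ->
  is_lub_Rbar (fun x => x = 0 \/ S x) (Finite (sup01 S)) /\ 0 <= sup01 S.
Proof.
  intros HB. unfold sup01.
  destruct (Lub_Rbar_correct (fun x => x = 0 \/ S x)) as [Hu Hl].
  assert (H0 : Rbar_le 0 (Lub_Rbar (fun x => x = 0 \/ S x))) by (apply Hu; auto).
  assert (H1 : Rbar_le (Lub_Rbar (fun x => x = 0 \/ S x)) (Rmax 0 B)).
  { apply Hl. intros x [->|Hx]; simpl. apply Rmax_l. eapply Rle_trans; [apply HB; auto|apply Rmax_r]. }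
  destruct (Lub_Rbar (fun x => x = 0 \/ S x)) eqn:E; simpl in *; try contradiction.
  split; [|lra]. rewrite <- E. apply Lub_Rbar_correct.
Qed.

Lemma sup01_ub S B x : (forall x, S x -> x <= B) -> S x -> x <= sup01 S.
Proof. intros HB Hx. destruct (sup01_spec S B HB) as [[Hu _] _]. apply (Hu x). auto. Qed.

Lemma sup01_ge0 S B : (forall x, S x -> x <= B) -> 0 <= sup01 S.
Proof. intros HB. apply (sup01_spec S B HB). Qed.

Lemma sup01_least S b : (forall x, S x -> x <= b) -> 0 <= b -> sup01 S <= b.
Proof. intros HB H0. destruct (sup01_spec S b HB) as [[_ Hl] _].
  apply (Hl (Finite b)). intros x [->|Hx]; simpl; auto. Qed.

Lemma sup01_approx S B eps : (forall x, S x -> x <= B) -> 0 < eps ->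
  sup01 S - eps < 0 \/ exists x, S x /\ sup01 S - eps < x.
Proof.
  intros HB He. destruct (Rlt_dec (sup01 S - eps) 0) as [h|h]; [left; auto|right].
  apply Classical_Prop.NNPP. intro Hn.
  assert (sup01 S <= sup01 S - eps); [|lra].
  apply sup01_least; [|lra]. intros x Hx. destruct (Rle_dec x (sup01 S - eps)); auto.
  exfalso; apply Hn; exists x; split; auto; lra.
Qed.

Lemma sup01_list S l : (forall x, S x <-> In x l) -> sup01 S = fold_right Rmax 0 l.
Proof.
  intros HS. unfold sup01.
  assert (Hub : forall x, In x l -> x <= fold_right Rmax 0 l).
  { clear HS. induction l; simpl; intros x []; subst.
    apply Rmax_l. eapply Rle_trans; [apply IHl; auto| apply Rmax_r]. }
  assert (H0 : 0 <= fold_right Rmax 0 l).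
  { clear. induction l; simpl. lra. eapply Rle_trans; [apply IHl|apply Rmax_r]. }
  assert (Hin : fold_right Rmax 0 l = 0 \/ In (fold_right Rmax 0 l) l).
  { clear. induction l; simpl. auto.
    destruct (Rle_dec a (fold_right Rmax 0 l)) as [h|h];
    [rewrite Rmax_right by lra; destruct IHl; auto | rewrite Rmax_left by lra; auto]. }
  rewrite (is_lub_Rbar_unique _ (Finite (fold_right Rmax 0 l))); [reflexivity|]. split.
  - intros x [->|Hx]; simpl; auto. apply Hub, HS, Hx.
  - intros b Hb. destruct Hin as [Hin|Hin]. rewrite Hin. apply Hb; auto.
    apply Hb. right. apply HS, Hin.
Qed.

Lemma inf01_spec (S : R -> Prop) (B : R) :
  (forall x, S x -> B <= x) ->
  is_glb_Rbar (fun x => x = 1 \/ S x) (Finite (inf01 S)) /\ inf01 S <= 1.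
Proof.
  intros HB. unfold inf01.
  destruct (Glb_Rbar_correct (fun x => x = 1 \/ S x)) as [Hu Hl].
  assert (H0 : Rbar_le (Glb_Rbar (fun x => x = 1 \/ S x)) 1) by (apply Hu; auto).
  assert (H1 : Rbar_le (Rmin 1 B) (Glb_Rbar (fun x => x = 1 \/ S x))).
  { apply Hl. intros x [->|Hx]; simpl. apply Rmin_l. eapply Rle_trans; [apply Rmin_r|apply HB; auto]. }
  destruct (Glb_Rbar (fun x => x = 1 \/ S x)) eqn:E; simpl in *; try contradiction.
  split; [|lra]. rewrite <- E. apply Glb_Rbar_correct.
Qed.

Lemma inf01_lb S B x : (forall x, S x -> B <= x) -> S x -> inf01 S <= x.
Proof. intros HB Hx. destruct (inf01_spec S B HB) as [[Hu _] _]. apply (Hu x). auto. Qed.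

Lemma inf01_le1 S B : (forall x, S x -> B <= x) -> inf01 S <= 1.
Proof. intros HB. apply (inf01_spec S B HB). Qed.

Lemma inf01_greatest S b : (forall x, S x -> b <= x) -> b <= 1 -> b <= inf01 S.
Proof. intros HB H0. destruct (inf01_spec S b HB) as [[_ Hl] _].
  apply (Hl (Finite b)). intros x [->|Hx]; simpl; auto. Qed.

Lemma inf01_approx S B eps : (forall x, S x -> B <= x) -> 0 < eps ->
  inf01 S + eps > 1 \/ exists x, S x /\ x < inf01 S + eps.
Proof.
  intros HB He. destruct (Rgt_dec (inf01 S + eps) 1) as [h|h]; [left; auto|right].
  apply Classical_Prop.NNPP. intro Hn.
  assert (inf01 S + eps <= inf01 S); [|lra].
  apply inf01_greatest; [|lra]. intros x Hx. destruct (Rle_dec (inf01 S + eps) x); auto.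
  exfalso; apply Hn; exists x; split; auto; lra.
Qed.

Lemma inf01_list S l : (forall x, S x <-> In x l) -> inf01 S = fold_right Rmin 1 l.
Proof.
  intros HS. unfold inf01.
  assert (Hub : forall x, In x l -> fold_right Rmin 1 l <= x).
  { clear HS. induction l; simpl; intros x []; subst.
    apply Rmin_l. eapply Rle_trans; [apply Rmin_r|apply IHl; auto]. }
  assert (H0 : fold_right Rmin 1 l <= 1).
  { clear. induction l; simpl. lra. eapply Rle_trans; [apply Rmin_r|apply IHl]. }
  assert (Hin : fold_right Rmin 1 l = 1 \/ In (fold_right Rmin 1 l) l).
  { clear. induction l; simpl. auto.
    destruct (Rle_dec a (fold_right Rmin 1 l)) as [h|h];
    [rewrite Rmin_left by lra; auto | rewrite Rmin_right by lra; destruct IHl; auto]. }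
  rewrite (is_glb_Rbar_unique _ (Finite (fold_right Rmin 1 l))); [reflexivity|]. split.
  - intros x [->|Hx]; simpl; auto. apply Hub, HS, Hx.
  - intros b Hb. destruct Hin as [Hin|Hin]. rewrite Hin. apply Hb; auto.
    apply Hb. right. apply HS, Hin.
Qed.

Lemma eval_range W (Rel : W -> W -> Prop) e :
  (forall p w, 0 <= e p w <= 1) -> forall phi v, 0 <= eval Rel e phi v <= 1.
Proof.
  intros He phi. induction phi; intro v; simpl.
  - apply He.
  - specialize (IHphi1 v); specialize (IHphi2 v). unfold Rmin; destruct Rle_dec; lra.
  - specialize (IHphi1 v); specialize (IHphi2 v). unfold Rmax; destruct Rle_dec; lra.
  - specialize (IHphi1 v); specialize (IHphi2 v). unfold luk_prod, Rmax; destruct Rle_dec; lra.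
  - specialize (IHphi1 v); specialize (IHphi2 v). unfold luk_imp, Rmin; destruct Rle_dec; lra.
  - lra.
  - lra.
  - split.
    + apply inf01_greatest; [|lra]. intros x [w [_ ->]]. apply IHphi.
    + apply (inf01_le1 _ 0). intros x [w [_ ->]]. apply IHphi.
  - split.
    + apply (sup01_ge0 _ 1). intros x [w [_ ->]]. apply IHphi.
    + apply sup01_least; [|lra]. intros x [w [_ ->]]. apply IHphi.
Qed.

Definition pV := Var 0.
Definition DD := Imp (Imp (Dia pV) Bot) (Dia pV).
Definition G3 := Box (Imp pV DD) :: Box (Imp DD pV) :: nil.
Definition F3 := Or (Dia pV) (Imp (Dia pV) Bot).

Lemma inMV_range n x : (1 <= n)%nat -> in_MV n x -> 0 <= x <= 1.
Proof.
  intros Hn [k [Hk ->]]. apply le_INR in Hn, Hk. simpl in Hn.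
  split. apply Rmult_le_pos. apply pos_INR. left; apply Rinv_0_lt_compat; lra.
  apply (Rmult_le_reg_r (INR n)). lra. unfold Rdiv. rewrite Rmult_assoc, Rinv_l by lra. lra.
Qed.

Lemma box_one W (Rel : W -> W -> Prop) e a v u :
  (forall p w, 0 <= e p w <= 1) ->
  eval Rel e (Box a) v = 1 -> Rel v u -> eval Rel e a u = 1.
Proof.
  intros He H Hr. simpl in H.
  assert (inf01 (fun x => exists w, Rel v w /\ x = eval Rel e a w) <= eval Rel e a u).
  { apply (inf01_lb _ 0). intros x [w [_ ->]]. apply eval_range; auto. eauto. }
  pose proof (eval_range W Rel e He a u). lra.
Qed.

Lemma imp_one a b : luk_imp a b = 1 -> a <= b.
Proof. unfold luk_imp, Rmin. destruct Rle_dec; lra. Qed.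

Lemma div_helper a b n : 0 < n -> a / n <= b / n / 2 -> a * 2 <= b.
Proof. intros Hn H. apply (Rmult_le_compat_r (n*2)) in H; [|lra].
  replace (a/n*(n*2)) with (a*2) in H by (field; lra).
  replace (b/n/2*(n*2)) with b in H by (field; lra). auto. Qed.

Lemma part3a : entails K4_omegaL G3 F3.
Proof.
  intros W Rel e [[n [Hn He]] Htr] v HG.
  assert (Hr : forall p w, 0 <= e p w <= 1) by (intros; eapply inMV_range; eauto).
  set (dia := fun u => sup01 (fun x => exists w, Rel u w /\ x = e 0%nat w)).
  assert (Hd : forall u, 0 <= dia u <= 1).
  { intro u. split. apply (sup01_ge0 _ 1). intros x [w [_ ->]]; apply Hr.
    apply sup01_least; [|lra]. intros x [w [_ ->]]; apply Hr. }
  assert (HD : forall u, eval Rel e DD u = Rmin 1 (2 * dia u)).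
  { intro u. simpl. fold (dia u). specialize (Hd u). unfold luk_imp.
    rewrite (Rmin_right 1 (1 - dia u + 0)) by lra. f_equal. lra. }
  assert (Hkey : forall u, Rel v u -> e 0%nat u = Rmin 1 (2 * dia u)).
  { intros u Hu.
    assert (H1 := box_one _ _ _ _ _ u Hr (HG _ (or_introl eq_refl)) Hu).
    assert (H2 := box_one _ _ _ _ _ u Hr (HG _ (or_intror (or_introl eq_refl))) Hu).
    apply imp_one in H1, H2. rewrite HD in H1, H2. simpl in H1, H2. lra. }
  assert (HnR : 1 <= INR n) by (apply le_INR in Hn; simpl in Hn; lra).
  assert (Hind : forall k j u, (j <= k)%nat -> Rel v u -> e 0%nat u = INR j / INR n ->
                 (0 < j < n)%nat -> False).
  { induction k as [|k IH]; intros j u Hjk Hu Hv Hj. lia.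
    assert (HjR : 0 < INR j < INR n) by (destruct Hj as [Hj1 Hj2]; split;
      [apply lt_0_INR; auto | apply lt_INR; auto]).
    assert (Hval : 0 < e 0%nat u < 1).
    { rewrite Hv. split. apply Rdiv_lt_0_compat; lra.
      apply (Rmult_lt_reg_r (INR n)). lra. unfold Rdiv. rewrite Rmult_assoc, Rinv_l by lra. lra. }
    assert (Hdu : e 0%nat u = 2 * dia u).
    { rewrite (Hkey u Hu) in *. unfold Rmin in *. destruct Rle_dec; lra. }
    destruct (classic (exists u', Rel u u' /\ 0 < e 0%nat u')) as [[u' [Hu' Hpos]]|Hno].
    - assert (Hle : e 0%nat u' <= dia u).
      { apply (sup01_ub _ 1). intros x [w [_ ->]]; apply Hr. eauto. }
      destruct (He 0%nat u') as [j' [Hj' Hv']].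
      apply (IH j' u').
      + rewrite Hv, Hv' in *.
        assert (INR j' * 2 <= INR j).
        { apply (div_helper _ _ (INR n)); lra. }
        assert (INR (j' * 2) <= INR j) by (rewrite mult_INR; simpl; lra). apply INR_le in H0. lia.
      + eapply Htr; eauto.
      + auto.
      + rewrite Hv' in Hpos. split.
        * destruct j'. simpl in Hpos. unfold Rdiv in Hpos. lra. lia.
        * assert (INR j' / INR n <= INR j / INR n / 2) by (rewrite Hv, Hv' in *; lra).
          apply div_helper in H; [|lra].
          assert (INR j' < INR n) by lra. apply INR_lt in H0. auto.
    - assert (dia u <= 0).
      { apply sup01_least; [|lra]. intros x [w [Hw ->]].
        destruct (Rle_dec (e 0%nat w) 0); auto. exfalso; apply Hno; exists w; split; auto; lra. }
      lra. }
  assert (H01 : forall u, Rel v u -> e 0%nat u = 0 \/ e 0%nat u = 1).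
  { intros u Hu. destruct (He 0%nat u) as [k [Hk Hv]].
    destruct k. left. rewrite Hv. simpl. unfold Rdiv. lra.
    destruct (Nat.eq_dec (S k) n) as [Heq|Hne].
    right. rewrite Hv, Heq. field. lra.
    exfalso. apply (Hind (S k) (S k) u); auto; lia. }
  simpl. fold (dia v). unfold luk_imp.
  destruct (classic (exists u, Rel v u /\ e 0%nat u = 1)) as [[u [Hu H1]]|Hno].
  - assert (dia v = 1).
    { assert (e 0%nat u <= dia v) by (apply (sup01_ub _ 1); [intros x [w [_ ->]]; apply Hr| eauto]).
      specialize (Hd v). lra. }
    rewrite H. rewrite Rmax_left; auto. unfold Rmin; destruct Rle_dec; lra.
  - assert (dia v = 0).
    { assert (dia v <= 0); [|specialize (Hd v); lra].
      apply sup01_least; [|lra]. intros x [w [Hw ->]].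
      destruct (H01 w Hw) as [h|h]; [lra|]. exfalso; eauto. }
    rewrite H. rewrite Rmin_left by lra. apply Rmax_right. lra.
Qed.

Lemma half_pow m : 0 < (1/2)^m <= 1.
Proof. induction m; simpl; lra. Qed.

Lemma part3b : ~ entails K4_L G3 F3.
Proof.
  intro H.
  set (e := fun (_ : nat) (j : nat) => (1/2)^j).
  assert (Hr : forall p w, 0 <= e p w <= 1) by (intros; unfold e; pose proof (half_pow w); lra).
  assert (Hdia : forall j, eval lt e (Dia pV) j = (1/2)^(S j)).
  { intro j. change (eval lt e (Dia pV) j) with (sup01 (fun x => exists w, lt j w /\ x = e 0%nat w)).
    apply Rle_antisym.
    - apply sup01_least. intros x [w [Hw ->]]. unfold e.
      replace w with (S j + (w - S j))%nat by lia. rewrite pow_add.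
      pose proof (half_pow (w - S j)). pose proof (half_pow (S j)).
      nra.
      pose proof (half_pow (S j)); lra.
    - apply (sup01_ub _ 1). intros x [w [_ ->]]; apply Hr. exists (S j). split; auto. }
  assert (HD : forall j, eval lt e DD j = (1/2)^j).
  { intro j. unfold DD. change (eval lt e (Imp (Imp (Dia pV) Bot) (Dia pV)) j) with
     (luk_imp (luk_imp (eval lt e (Dia pV) j) 0) (eval lt e (Dia pV) j)). rewrite Hdia. unfold luk_imp. simpl.
    pose proof (half_pow j). rewrite (Rmin_right 1 (1 - 1/2 * (1/2)^j + 0)) by lra.
    rewrite Rmin_right; lra. }
  assert (HK : K4_L nat lt e).
  { split. exact Hr. intros a b c; lia. }
  specialize (H nat lt e HK 0%nat).
  assert (eval lt e F3 0%nat = 1).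
  { apply H. intros g Hg. simpl in Hg.
    assert (Hall : forall a, (forall j, eval lt e a j = 1) -> eval lt e (Box a) 0%nat = 1).
    { intros a Ha. simpl. apply Rle_antisym. apply (inf01_le1 _ 0).
      intros x [w [_ ->]]. rewrite Ha; lra.
      apply inf01_greatest; [|lra]. intros x [w [_ ->]]. rewrite Ha; lra. }
    destruct Hg as [<-|[<-|[]]]; apply Hall; intro j; cbn [eval]; rewrite HD; unfold pV; cbn [eval]; unfold luk_imp, e;
      apply Rmin_left; lra. }
  unfold F3 in H0. change (eval lt e (Or (Dia pV) (Imp (Dia pV) Bot)) 0%nat) with (Rmax (eval lt e (Dia pV) 0%nat) (luk_imp (eval lt e (Dia pV) 0%nat) 0)) in H0. rewrite Hdia in H0. unfold luk_imp in H0. simpl in H0.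
  rewrite Rmin_right in H0 by lra. rewrite Rmax_left in H0 by lra. lra.
Qed.

Inductive term : Type :=
| TZ | TO | TV (i : nat) | TPl (a b : term) | TNg (a : term) | TMn (a b : term) | TMx (a b : term).

Fixpoint teval (t : term) (x : nat -> R) : R :=
  match t with
  | TZ => 0 | TO => 1 | TV i => x i
  | TPl a b => teval a x + teval b x
  | TNg a => - teval a x
  | TMn a b => Rmin (teval a x) (teval b x)
  | TMx a b => Rmax (teval a x) (teval b x)
  end.

Fixpoint vars (t : term) : list nat :=
  match t with
  | TZ | TO => nil | TV i => i :: nil
  | TPl a b | TMn a b | TMx a b => vars a ++ vars b
  | TNg a => vars a
  end.

Definition sumabs (l : list nat) (x y : nat -> R) : R :=
  fold_right (fun i acc => Rabs (x i - y i) + acc) 0 l.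

Lemma sumabs_app l1 l2 x y : sumabs (l1 ++ l2) x y = sumabs l1 x y + sumabs l2 x y.
Proof. induction l1; simpl. lra. unfold sumabs in *; simpl. rewrite IHl1. lra. Qed.

Lemma sumabs_ge0 l x y : 0 <= sumabs l x y.
Proof. induction l; simpl. lra. unfold sumabs in *; simpl. pose proof (Rabs_pos (x a - y a)). lra. Qed.

Lemma Rmin_lip a b c d : Rabs (Rmin a b - Rmin c d) <= Rabs (a - c) + Rabs (b - d).
Proof. unfold Rmin, Rabs; repeat destruct Rle_dec; repeat destruct Rcase_abs; lra. Qed.
Lemma Rmax_lip a b c d : Rabs (Rmax a b - Rmax c d) <= Rabs (a - c) + Rabs (b - d).
Proof. unfold Rmax, Rabs; repeat destruct Rle_dec; repeat destruct Rcase_abs; lra. Qed.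

Lemma term_lip t : exists K, 0 <= K /\ forall x y,
  Rabs (teval t x - teval t y) <= K * sumabs (vars t) x y.
Proof.
  induction t; simpl.
  - exists 0. split. lra. intros. rewrite Rminus_diag, Rabs_R0. lra.
  - exists 0. split. lra. intros. rewrite Rminus_diag, Rabs_R0. lra.
  - exists 1. split. lra. intros. unfold sumabs; simpl. lra.
  - destruct IHt1 as [K1 [H1 L1]], IHt2 as [K2 [H2 L2]]. exists (K1 + K2). split. lra.
    intros x y. rewrite sumabs_app. specialize (L1 x y); specialize (L2 x y).
    pose proof (sumabs_ge0 (vars t1) x y); pose proof (sumabs_ge0 (vars t2) x y).
    pose proof (Rabs_triang (teval t1 x - teval t1 y) (teval t2 x - teval t2 y)).
    replace (teval t1 x + teval t2 x - (teval t1 y + teval t2 y)) with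
      ((teval t1 x - teval t1 y) + (teval t2 x - teval t2 y)) by ring. nra.
  - destruct IHt as [K1 [H1 L1]]. exists K1. split. auto. intros x y.
    replace (- teval t x - - teval t y) with (- (teval t x - teval t y)) by ring.
    rewrite Rabs_Ropp. auto.
  - destruct IHt1 as [K1 [H1 L1]], IHt2 as [K2 [H2 L2]]. exists (K1 + K2). split. lra.
    intros x y. rewrite sumabs_app. specialize (L1 x y); specialize (L2 x y).
    pose proof (sumabs_ge0 (vars t1) x y); pose proof (sumabs_ge0 (vars t2) x y).
    pose proof (Rmin_lip (teval t1 x) (teval t2 x) (teval t1 y) (teval t2 y)). nra.
  - destruct IHt1 as [K1 [H1 L1]], IHt2 as [K2 [H2 L2]]. exists (K1 + K2). split. lra.
    intros x y. rewrite sumabs_app. specialize (L1 x y); specialize (L2 x y).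
    pose proof (sumabs_ge0 (vars t1) x y); pose proof (sumabs_ge0 (vars t2) x y).
    pose proof (Rmax_lip (teval t1 x) (teval t2 x) (teval t1 y) (teval t2 y)). nra.
Qed.

Lemma teval_ext t x y : (forall i, In i (vars t) -> x i = y i) -> teval t x = teval t y.
Proof.
  induction t; simpl; intros H; auto;
  try (rewrite IHt1, IHt2; auto; intros; apply H; apply in_or_app; auto).
  rewrite IHt; auto.
Qed.

Definition foldMn (ts : list term) : term := fold_right TMn TO ts.
Definition foldMx (ts : list term) : term := fold_right TMx TZ ts.

Lemma teval_foldMn ts x : teval (foldMn ts) x = fold_right Rmin 1 (map (fun t => teval t x) ts).
Proof. induction ts; simpl; auto. rewrite <- IHts. reflexivity. Qed.
Lemma teval_foldMx ts x : teval (foldMx ts) x = fold_right Rmax 0 (map (fun t => teval t x) ts).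
Proof. induction ts; simpl; auto. rewrite <- IHts. reflexivity. Qed.

Definition upd (x : nat -> R) (a : nat) (t : R) : nat -> R :=
  fun i => if Nat.eq_dec i a then t else x i.

Definition cube (l : list nat) (x : nat -> R) : Prop := forall i, In i l -> 0 <= x i <= 1.

Lemma sumabs_upd_same l x a t t' : sumabs l (upd x a t) (upd x a t') <= INR (length l) * Rabs (t - t').
Proof.
  induction l. unfold sumabs; simpl; lra.
  unfold sumabs in *; cbn [fold_right length] in *. rewrite S_INR. unfold upd at 1 2. destruct Nat.eq_dec.
  - lra.
  - rewrite Rminus_diag, Rabs_R0. pose proof (Rabs_pos (t - t')). lra.
Qed.

Lemma sumabs_upd_diff a l x y t : sumabs (a :: l) (upd x a t) (upd y a t) <= sumabs l x y.
Proof.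
  unfold sumabs; simpl. unfold upd at 1 2. destruct Nat.eq_dec; [|congruence].
  rewrite Rminus_diag, Rabs_R0, Rplus_0_l.
  induction l; simpl. lra.
  unfold upd at 1 2. destruct Nat.eq_dec.
  - rewrite Rminus_diag, Rabs_R0. pose proof (Rabs_pos (x a0 - y a0)). lra.
  - lra.
Qed.

Lemma lip_cont (h : R -> R) C : 0 <= C -> (forall t t', Rabs (h t - h t') <= C * Rabs (t - t')) ->
  forall c, continuity_pt h c.
Proof.
  intros HC Hl c eps Heps. exists (eps / (C + 1)). split.
  - apply Rdiv_lt_0_compat; lra.
  - intros y [_ Hy]. simpl in *. unfold Rdist in *.
    eapply Rle_lt_trans. apply Hl.
    apply Rle_lt_trans with ((C+1) * Rabs (y - c)).
    pose proof (Rabs_pos (y - c)); nra.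
    apply (Rmult_lt_compat_l (C+1)) in Hy; [|lra].
    replace ((C + 1) * (eps / (C + 1))) with eps in Hy by (field; lra). lra.
Qed.

Lemma evt l : forall f K, 0 <= K -> (forall x y, Rabs (f x - f y) <= K * sumabs l x y) ->
  exists xs, cube l xs /\ forall x, cube l x -> f x <= f xs.
Proof.
  induction l as [|a l IH]; intros f K HK Hl.
  - exists (fun _ => 0). split. intros i []. intros x _.
    specialize (Hl x (fun _ => 0)). unfold sumabs in Hl; simpl in Hl.
    rewrite Rmult_0_r in Hl. apply Rabs_le_between in Hl. lra.
  - assert (Hmax : forall x, exists t, (0 <= t <= 1) /\ forall c, 0 <= c <= 1 -> f (upd x a c) <= f (upd x a t)).
    { intro x. destruct (continuity_ab_maj (fun t => f (upd x a t)) 0 1) as [t [H1 H2]].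
      lra. intros c _. apply (lip_cont _ (K * INR (length (a :: l)))).
      apply Rmult_le_pos; auto. apply pos_INR.
      intros t t'. eapply Rle_trans. apply Hl. rewrite Rmult_assoc. apply Rmult_le_compat_l; auto.
      apply sumabs_upd_same. exists t. auto. }
    set (tm := fun x => proj1_sig (constructive_indefinite_description _ (Hmax x))).
    assert (Htm : forall x, (0 <= tm x <= 1) /\ forall c, 0 <= c <= 1 -> f (upd x a c) <= f (upd x a (tm x))).
    { intro x. unfold tm. destruct constructive_indefinite_description; simpl; auto. }
    set (g := fun x => f (upd x a (tm x))).
    assert (Hg : forall x y, Rabs (g x - g y) <= K * sumabs l x y).
    { intros x y. apply Rabs_le_between. unfold g.
      assert (A1 : f (upd y a (tm y)) - K * sumabs l x y <= f (upd x a (tm x))).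
      { apply Rle_trans with (f (upd x a (tm y))).
        - pose proof (Hl (upd x a (tm y)) (upd y a (tm y))) as H.
          pose proof (sumabs_upd_diff a l x y (tm y)).
          apply Rabs_le_between in H. nra.
        - apply Htm, Htm. }
      assert (A2 : f (upd x a (tm x)) - K * sumabs l x y <= f (upd y a (tm y))).
      { apply Rle_trans with (f (upd y a (tm x))).
        - pose proof (Hl (upd y a (tm x)) (upd x a (tm x))) as H.
          pose proof (sumabs_upd_diff a l y x (tm x)).
          assert (sumabs l y x = sumabs l x y).
          { clear. induction l; unfold sumabs in *; simpl; auto. rewrite IHl, Rabs_minus_sym. auto. }
          apply Rabs_le_between in H. nra.
        - apply Htm, Htm. }
      lra. }
    destruct (IH g K HK Hg) as [xs [Hc Hm]].
    exists (upd xs a (tm xs)). split.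
    + intros i Hi. unfold upd. destruct Nat.eq_dec. apply Htm.
      destruct Hi. congruence. auto.
    + intros x Hx. apply Rle_trans with (g x).
      * unfold g. replace x with (upd x a (x a)) at 1.
        apply Htm. apply Hx; simpl; auto.
        apply functional_extensionality. intro i. unfold upd. destruct Nat.eq_dec; congruence.
      * apply Hm. intros i Hi. apply Hx. simpl; auto.
Qed.

Lemma evt_sup l f K : 0 <= K -> (forall x y, Rabs (f x - f y) <= K * sumabs l x y) ->
  (forall k : nat, exists x, cube l x /\ 1 - / (INR k + 1) <= f x) ->
  exists x, cube l x /\ 1 <= f x.
Proof.
  intros HK Hl Hk. destruct (evt l f K HK Hl) as [xs [Hc Hm]]. exists xs. split; auto.
  destruct (Rle_dec 1 (f xs)) as [h|h]; auto. exfalso.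
  destruct (archimed (/ (1 - f xs))) as [H1 _].
  assert (0 < 1 - f xs) by lra.
  set (k := Z.to_nat (up (/ (1 - f xs)))).
  assert (Hk' : / (1 - f xs) < INR k + 1).
  { unfold k. destruct (Z.lt_ge_cases (up (/ (1 - f xs))) 0).
    - pose proof (Rinv_0_lt_compat _ H). assert (IZR (up (/ (1 - f xs))) < 0) by (apply IZR_lt; auto). lra.
    - rewrite INR_IZR_INZ, Z2Nat.id by auto. lra. }
  destruct (Hk k) as [x [Hx Hf]]. specialize (Hm x Hx).
  assert (/ (INR k + 1) < 1 - f xs).
  { pose proof (pos_INR k). rewrite <- (Rinv_inv (1 - f xs)). apply Rinv_lt_contravar.
    apply Rmult_lt_0_compat. apply Rinv_0_lt_compat; lra. lra. auto. }
  lra.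
Qed.

Record fm : Type := mkF { fc : Q ; fa : nat -> Q }.

Fixpoint sumN (n : nat) (g : nat -> R) : R :=
  match n with O => 0 | S n' => sumN n' g + g n' end.

Definition feval (n : nat) (f : fm) (x : nat -> R) : R :=
  Q2R (fc f) + sumN n (fun i => Q2R (fa f i) * x i).

Definition holds (n : nat) (c : fm * bool) (x : nat -> R) : Prop :=
  if snd c then feval n (fst c) x = 0 else 0 < feval n (fst c) x.

Lemma sumN_ext n g h : (forall i, (i < n)%nat -> g i = h i) -> sumN n g = sumN n h.
Proof. induction n; simpl; intros H; auto. rewrite IHn, H; auto. Qed.

Lemma sumN_plus n g h : sumN n (fun i => g i + h i) = sumN n g + sumN n h.
Proof. induction n; simpl. lra. rewrite IHn. lra. Qed.

Lemma sumN_scale n c g : sumN n (fun i => c * g i) = c * sumN n g.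
Proof. induction n; simpl. lra. rewrite IHn. lra. Qed.

Lemma sumN_zero n g : (forall i, (i < n)%nat -> g i = 0) -> sumN n g = 0.
Proof. induction n; simpl; intros H; auto. rewrite IHn, H; auto. lra. Qed.

Lemma feval_ext n f x y : (forall i, (i < n)%nat -> x i = y i) -> feval n f x = feval n f y.
Proof. intros H. unfold feval. f_equal. apply sumN_ext. intros i Hi. rewrite H; auto. Qed.

Lemma Q2R_0 : Q2R 0 = 0.
Proof. unfold Q2R; simpl. lra. Qed.
Lemma Q2R_1 : Q2R 1 = 1.
Proof. unfold Q2R; simpl. lra. Qed.

Lemma Q2R_nz q : ~ (q == 0)%Q -> Q2R q <> 0.
Proof. intros H H'. apply H. apply eqR_Qeq. rewrite H', Q2R_0. auto. Qed.

Definition subst (n' : nat) (f g : fm) : fm :=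
  mkF (fc f + fa f n' * fc g)%Q (fun j => fa f j + fa f n' * fa g j)%Q.

Lemma feval_subst n' f g x : x n' = feval n' g x ->
  feval (S n') f x = feval n' (subst n' f g) x.
Proof.
  intros H. unfold feval, subst; simpl. rewrite Q2R_plus, Q2R_mult.
  rewrite (sumN_ext n' (fun i => Q2R (fa f i + fa f n' * fa g i) * x i)
    (fun i => Q2R (fa f i) * x i + Q2R (fa f n') * (Q2R (fa g i) * x i))).
  2:{ intros. rewrite Q2R_plus, Q2R_mult. ring. }
  rewrite sumN_plus, sumN_scale. rewrite H. unfold feval. ring.
Qed.

Lemma feval_rational n f x : (forall i, (i < n)%nat -> exists q, x i = Q2R q) ->
  exists q, feval n f x = Q2R q.
Proof.
  intros H. unfold feval.
  assert (exists q, sumN n (fun i => Q2R (fa f i) * x i) = Q2R q) as [q Hq].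
  { induction n; simpl. exists 0%Q. rewrite Q2R_0; auto.
    destruct IHn as [q1 H1]. intros; apply H; lia.
    destruct (H n) as [q2 H2]. lia. exists (q1 + fa f n * q2)%Q.
    rewrite Q2R_plus, Q2R_mult, H1, H2. auto. }
  exists (fc f + q)%Q. rewrite Q2R_plus, Hq. auto.
Qed.

Lemma feval_upd n' f x r : feval (S n') f (upd x n' r) = feval (S n') f x + Q2R (fa f n') * (r - x n').
Proof.
  unfold feval; simpl. rewrite (sumN_ext n' (fun i => Q2R (fa f i) * upd x n' r i) (fun i => Q2R (fa f i) * x i)).
  unfold upd. destruct Nat.eq_dec; [|congruence]. ring.
  intros i Hi. unfold upd. destruct Nat.eq_dec. lia. auto.
Qed.

Lemma Q_dense (y delta : R) : 0 < delta -> exists q : Q, Rabs (Q2R q - y) < delta.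
Proof.
  intros Hd.
  destruct (archimed (/ delta)) as [H1 _].
  assert (Hpos : (0 < up (/ delta))%Z).
  { apply lt_IZR. pose proof (Rinv_0_lt_compat _ Hd). simpl. lra. }
  set (p := Z.to_pos (up (/ delta))).
  assert (Hp : IZR (Zpos p) = IZR (up (/ delta))) by (unfold p; rewrite Z2Pos.id; auto).
  destruct (archimed (y * IZR (Zpos p))) as [H2 H3].
  exists (Qmake (up (y * IZR (Zpos p))) p).
  unfold Q2R; simpl.
  assert (HP : 0 < IZR (Zpos p)) by (apply IZR_lt; lia).
  set (P := IZR (Zpos p)) in *. set (u := IZR (up (y * P))) in *.
  replace (u * / P - y) with ((u - y * P) / P) by (field; lra).
  rewrite Rabs_right.
  2:{ apply Rle_ge. apply Rmult_le_pos. lra. left; apply Rinv_0_lt_compat; lra. }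
  apply Rle_lt_trans with (1 / P).
  { unfold Rdiv. apply Rmult_le_compat_r. left; apply Rinv_0_lt_compat; lra. lra. }
  unfold Rdiv; rewrite Rmult_1_l. rewrite <- (Rinv_inv delta). apply Rinv_lt_contravar.
  apply Rmult_lt_0_compat; [apply Rinv_0_lt_compat; lra | lra]. rewrite Hp; lra.
Qed.

Lemma delta_exists n' (cs : list (fm * bool)) x :
  exists delta, 0 < delta /\ forall f, In (f, false) cs ->
    delta * (Rabs (Q2R (fa f n')) + 1) <= feval (S n') f x \/ feval (S n') f x <= 0.
Proof.
  induction cs as [|[f b] cs IH].
  - exists 1. split. lra. intros f [].
  - destruct IH as [d [Hd H]].
    destruct (Rle_dec (feval (S n') f x) 0) as [h|h].
    + exists d. split; auto. intros g [E|E]; auto. inversion E; subst. right; auto.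
    + set (d' := Rmin d (feval (S n') f x / (Rabs (Q2R (fa f n')) + 1))).
      pose proof (Rabs_pos (Q2R (fa f n'))) as Hab.
      assert (Hd' : 0 < d').
      { unfold d'. apply Rmin_glb_lt. auto. apply Rdiv_lt_0_compat; lra. }
      exists d'. split; auto. intros g [E|E].
      * inversion E; subst. pose proof (Rabs_pos (Q2R (fa g n'))). left. apply Rle_trans with (feval (S n') g x / (Rabs (Q2R (fa g n')) + 1) * (Rabs (Q2R (fa g n')) + 1)).
        apply Rmult_le_compat_r. lra. apply Rmin_r. right. field. lra.
      * pose proof (Rabs_pos (Q2R (fa g n'))). destruct (H g E) as [h1|h1]; [left|right; auto].
        eapply Rle_trans; [|apply h1]. apply Rmult_le_compat_r. lra. apply Rmin_l.
Qed.

Lemma elim_step n' (cs : list (fm * bool)) x :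
  (forall c, In c cs -> holds (S n') c x) ->
  exists g x1, x1 n' = feval n' g x1 /\ forall c, In c cs -> holds (S n') c x1.
Proof.
  intros Hh.
  destruct (classic (exists f, In (f, true) cs /\ ~ (fa f n' == 0)%Q)) as [[f [Hf Ha]]|Hno].
  - set (a := fa f n').
    exists (mkF (- fc f / a)%Q (fun j => - fa f j / a)%Q), x. split; auto.
    specialize (Hh _ Hf). unfold holds in Hh; simpl in Hh. unfold feval in *; simpl in *.
    pose proof (Q2R_nz _ Ha) as Ha'. fold a in Ha'.
    rewrite Q2R_div, Q2R_opp by auto.
    rewrite (sumN_ext n' (fun i => Q2R (- fa f i / a) * x i) (fun i => (- / Q2R a) * (Q2R (fa f i) * x i))).
    2:{ intros. rewrite Q2R_div, Q2R_opp by auto. field. auto. }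
    rewrite sumN_scale. fold a in Hh. apply (Rmult_eq_reg_l (Q2R a)); auto. field_simplify; auto.
    field_simplify in Hh. lra.
  - destruct (delta_exists n' cs x) as [d [Hd Hdel]].
    destruct (Q_dense (x n') d Hd) as [r Hr].
    exists (mkF r (fun _ => 0%Q)), (upd x n' (Q2R r)). split.
    + unfold feval; simpl. rewrite sumN_zero. unfold upd; destruct Nat.eq_dec; [lra|congruence].
      intros. rewrite Q2R_0. ring.
    + intros [f b] Hc. specialize (Hh _ Hc). unfold holds in *; simpl in *.
      rewrite feval_upd. destruct b.
      * assert (fa f n' == 0)%Q.
        { apply Classical_Prop.NNPP. intro. apply Hno. exists f. auto. }
        apply Qeq_eqR in H. rewrite Q2R_0 in H. rewrite H. lra.
      * destruct (Hdel f Hc) as [H|H]; [|lra].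
        pose proof (Rabs_pos (Q2R (fa f n'))).
        assert (Rabs (Q2R (fa f n') * (Q2R r - x n')) < d * (Rabs (Q2R (fa f n')) + 1)).
        { rewrite Rabs_mult. pose proof (Rabs_pos (Q2R r - x n')). nra. }
        apply Rabs_def2 in H1. nra.
Qed.

Lemma ratsol n : forall (cs : list (fm * bool)) x, (forall c, In c cs -> holds n c x) ->
  exists x', (forall i, (i < n)%nat -> exists q, x' i = Q2R q) /\ forall c, In c cs -> holds n c x'.
Proof.
  induction n as [|n' IH]; intros cs x Hh.
  - exists x. split; auto. intros; lia.
  - destruct (elim_step n' cs x Hh) as [g [x1 [Hx1 Hh1]]].
    set (cs' := map (fun c => (subst n' (fst c) g, snd c)) cs).
    assert (Hh' : forall c, In c cs' -> holds n' c x1).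
    { intros c Hc. unfold cs' in Hc. apply in_map_iff in Hc. destruct Hc as [[f b] [<- Hc]].
      specialize (Hh1 _ Hc). unfold holds in *; simpl in *. rewrite <- feval_subst; auto. }
    destruct (IH cs' x1 Hh') as [x' [Hr Hh2]].
    exists (upd x' n' (feval n' g x')). split.
    + intros i Hi. unfold upd. destruct Nat.eq_dec. apply feval_rational; auto. apply Hr; lia.
    + intros [f b] Hc.
      assert (Hc' : In (subst n' f g, b) cs') by (unfold cs'; apply in_map_iff; exists (f, b); auto).
      specialize (Hh2 _ Hc'). unfold holds in *; simpl in *.
      rewrite (feval_subst n' f g).
      * rewrite (feval_ext n' _ _ x'). auto. intros i Hi. unfold upd. destruct Nat.eq_dec; [lia|auto].
      * unfold upd at 1. destruct Nat.eq_dec; [|congruence].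
        apply feval_ext. intros i Hi. unfold upd. destruct Nat.eq_dec; [lia|auto].
Qed.

Definition fconst (q : Q) : fm := mkF q (fun _ => 0%Q).
Definition fvar (i : nat) : fm := mkF 0%Q (fun j => if Nat.eqb j i then 1%Q else 0%Q).
Definition fadd (f g : fm) : fm := mkF (fc f + fc g)%Q (fun j => fa f j + fa g j)%Q.
Definition fneg (f : fm) : fm := mkF (- fc f)%Q (fun j => - fa f j)%Q.
Definition fsub f g := fadd f (fneg g).

Lemma feval_const n q x : feval n (fconst q) x = Q2R q.
Proof. unfold feval; simpl. rewrite sumN_zero. ring. intros. rewrite Q2R_0; ring. Qed.
Lemma feval_add n f g x : feval n (fadd f g) x = feval n f x + feval n g x.
Proof. unfold feval; simpl. rewrite Q2R_plus.
  rewrite (sumN_ext n _ (fun i => Q2R (fa f i) * x i + Q2R (fa g i) * x i)).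
  rewrite sumN_plus. ring. intros. rewrite Q2R_plus; ring. Qed.
Lemma feval_neg n f x : feval n (fneg f) x = - feval n f x.
Proof. unfold feval; simpl. rewrite Q2R_opp.
  rewrite (sumN_ext n _ (fun i => (-1) * (Q2R (fa f i) * x i))).
  rewrite sumN_scale. ring. intros. rewrite Q2R_opp; ring. Qed.
Lemma feval_sub n f g x : feval n (fsub f g) x = feval n f x - feval n g x.
Proof. unfold fsub. rewrite feval_add, feval_neg. ring. Qed.
Lemma feval_var n i x : (i < n)%nat -> feval n (fvar i) x = x i.
Proof.
  intros H. unfold feval; simpl. rewrite Q2R_0, Rplus_0_l.
  induction n; simpl. lia.
  destruct (Nat.eq_dec i n).
  - subst. rewrite Nat.eqb_refl, Q2R_1. rewrite sumN_zero. ring.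
    intros j Hj. destruct (Nat.eqb_spec j n). lia. rewrite Q2R_0; ring.
  - rewrite IHn by lia. destruct (Nat.eqb_spec n i). lia. rewrite Q2R_0; ring.
Qed.

Definition mkc (n : nat) (f : fm) (x : nat -> R) : fm * bool :=
  (f, if Req_EM_T (feval n f x) 0 then true else false).

Lemma mkc_holds n f x : 0 <= feval n f x -> holds n (mkc n f x) x.
Proof. intros H. unfold mkc, holds; simpl. destruct Req_EM_T; simpl; auto. lra. Qed.
Lemma mkc_nonneg n f x y : holds n (mkc n f x) y -> 0 <= feval n f y.
Proof. unfold mkc, holds; simpl. destruct Req_EM_T; simpl; lra. Qed.

Fixpoint lin (n : nat) (x : nat -> R) (t : term) : fm :=
  match t with
  | TZ => fconst 0 | TO => fconst 1 | TV i => fvar i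
  | TPl a b => fadd (lin n x a) (lin n x b)
  | TNg a => fneg (lin n x a)
  | TMn a b => if Rle_dec (teval a x) (teval b x) then lin n x a else lin n x b
  | TMx a b => if Rle_dec (teval a x) (teval b x) then lin n x b else lin n x a
  end.

Fixpoint conds (n : nat) (x : nat -> R) (t : term) : list (fm * bool) :=
  match t with
  | TZ | TO | TV _ => nil
  | TPl a b => conds n x a ++ conds n x b
  | TNg a => conds n x a
  | TMn a b | TMx a b =>
     (if Rle_dec (teval a x) (teval b x) then mkc n (fsub (lin n x b) (lin n x a)) x
      else mkc n (fsub (lin n x a) (lin n x b)) x) :: conds n x a ++ conds n x b
  end.

Lemma lin_correct n x t : (forall i, In i (vars t) -> (i < n)%nat) ->
  feval n (lin n x t) x = teval t x /\ (forall c, In c (conds n x t) -> holds n c x) /\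
  (forall y, (forall c, In c (conds n x t) -> holds n c y) -> teval t y = feval n (lin n x t) y).
Proof.
  induction t; simpl; intros Hv.
  - rewrite feval_const, Q2R_0. split; auto. split. intros c []. intros; rewrite feval_const, Q2R_0; auto.
  - rewrite feval_const, Q2R_1. split; auto. split. intros c []. intros; rewrite feval_const, Q2R_1; auto.
  - rewrite feval_var by auto. split; auto. split. intros c []. intros; rewrite feval_var; auto.
  - destruct IHt1 as [A1 [B1 C1]]. intros; apply Hv, in_or_app; auto.
    destruct IHt2 as [A2 [B2 C2]]. intros; apply Hv, in_or_app; auto.
    rewrite feval_add, A1, A2. split; auto. split.
    + intros c Hc. apply in_app_or in Hc. destruct Hc; auto.
    + intros y Hy. rewrite feval_add, C1, C2; auto; intros; apply Hy, in_or_app; auto.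
  - destruct IHt as [A1 [B1 C1]]. auto.
    rewrite feval_neg, A1. split; auto. split; auto.
    intros y Hy. rewrite feval_neg, C1; auto.
  - destruct IHt1 as [A1 [B1 C1]]. intros; apply Hv, in_or_app; auto.
    destruct IHt2 as [A2 [B2 C2]]. intros; apply Hv, in_or_app; auto.
    destruct (Rle_dec (teval t1 x) (teval t2 x)) as [h|h].
    + rewrite A1, Rmin_left by auto. split; auto. split.
      * intros c [<-|Hc]. apply mkc_holds. rewrite feval_sub, A1, A2. lra.
        apply in_app_or in Hc. destruct Hc; auto.
      * intros y Hy. assert (H0 := mkc_nonneg _ _ _ _ (Hy _ (or_introl eq_refl))).
        rewrite feval_sub in H0. rewrite C1, C2 by (intros; apply Hy; right; apply in_or_app; auto).
        apply Rmin_left. lra.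
    + rewrite A2, Rmin_right by lra. split; auto. split.
      * intros c [<-|Hc]. apply mkc_holds. rewrite feval_sub, A1, A2. lra.
        apply in_app_or in Hc. destruct Hc; auto.
      * intros y Hy. assert (H0 := mkc_nonneg _ _ _ _ (Hy _ (or_introl eq_refl))).
        rewrite feval_sub in H0. rewrite C1, C2 by (intros; apply Hy; right; apply in_or_app; auto).
        apply Rmin_right. lra.
  - destruct IHt1 as [A1 [B1 C1]]. intros; apply Hv, in_or_app; auto.
    destruct IHt2 as [A2 [B2 C2]]. intros; apply Hv, in_or_app; auto.
    destruct (Rle_dec (teval t1 x) (teval t2 x)) as [h|h].
    + rewrite A2, Rmax_right by auto. split; auto. split.
      * intros c [<-|Hc]. apply mkc_holds. rewrite feval_sub, A1, A2. lra.
        apply in_app_or in Hc. destruct Hc; auto.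
      * intros y Hy. assert (H0 := mkc_nonneg _ _ _ _ (Hy _ (or_introl eq_refl))).
        rewrite feval_sub in H0. rewrite C1, C2 by (intros; apply Hy; right; apply in_or_app; auto).
        apply Rmax_right. lra.
    + rewrite A1, Rmax_left by lra. split; auto. split.
      * intros c [<-|Hc]. apply mkc_holds. rewrite feval_sub, A1, A2. lra.
        apply in_app_or in Hc. destruct Hc; auto.
      * intros y Hy. assert (H0 := mkc_nonneg _ _ _ _ (Hy _ (or_introl eq_refl))).
        rewrite feval_sub in H0. rewrite C1, C2 by (intros; apply Hy; right; apply in_or_app; auto).
        apply Rmax_left. lra.
Qed.

Lemma inMV_mul n m r : (1 <= m)%nat -> in_MV n r -> in_MV (n * m) r.
Proof.
  intros Hm [k [Hk ->]]. exists (k * m)%nat. split. nia.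
  rewrite !mult_INR. destruct (Nat.eq_dec n 0).
  - subst. simpl. unfold Rdiv. rewrite Rmult_0_l, Rinv_0. ring.
  - assert (0 < INR n) by (apply lt_0_INR; lia). assert (0 < INR m) by (apply lt_0_INR; lia).
    field. lra.
Qed.

Lemma Q_inMV q : 0 <= Q2R q <= 1 -> in_MV (Pos.to_nat (Qden q)) (Q2R q).
Proof.
  destruct q as [z p]. unfold Q2R; simpl. intros H.
  assert (HP : 0 < IZR (Zpos p)) by (apply IZR_lt; lia).
  assert (Hz : (0 <= z)%Z).
  { apply le_IZR. destruct H as [H _]. apply Rmult_le_reg_r with (/ IZR (Zpos p)).
    apply Rinv_0_lt_compat; auto. lra. }
  assert (Hz2 : (z <= Zpos p)%Z).
  { apply le_IZR. destruct H as [_ H]. apply Rmult_le_reg_r with (/ IZR (Zpos p)).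
    apply Rinv_0_lt_compat; auto. rewrite Rinv_r by lra. lra. }
  exists (Z.to_nat z). split. lia.
  rewrite !INR_IZR_INZ, Z2Nat.id by auto. rewrite positive_nat_Z. reflexivity.
Qed.

Lemma common_den N (x : nat -> R) :
  (forall i, (i < N)%nat -> (exists q, x i = Q2R q) /\ 0 <= x i <= 1) ->
  exists nn, (1 <= nn)%nat /\ forall i, (i < N)%nat -> in_MV nn (x i).
Proof.
  induction N; intros H.
  - exists 1%nat. split; auto. intros; lia.
  - destruct IHN as [n1 [Hn1 H1]]. intros; apply H; lia.
    destruct (H N) as [[q Hq] Hr]. lia.
    exists (n1 * Pos.to_nat (Qden q))%nat. split. nia.
    intros i Hi. destruct (Nat.eq_dec i N).
    + subst. rewrite Nat.mul_comm. apply inMV_mul. auto. rewrite Hq in *. apply Q_inMV; auto.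
    + apply inMV_mul. lia. apply H1. lia.
Qed.

Fixpoint encl (s : list nat) : nat :=
  match s with nil => 0%nat | a :: s' => S (Cantor.to_nat (a, encl s')) end.
Definition code (s : list nat) (p : nat) : nat := Cantor.to_nat (encl s, p).

Lemma to_nat_inj a b : Cantor.to_nat a = Cantor.to_nat b -> a = b.
Proof. intros H. rewrite <- (cancel_of_to a), <- (cancel_of_to b), H. auto. Qed.

Lemma encl_inj s t : encl s = encl t -> s = t.
Proof.
  revert t; induction s as [|a s IH]; intros [|b t]; cbn [encl]; intros H; try discriminate; auto.
  assert (H' : Cantor.to_nat (a, encl s) = Cantor.to_nat (b, encl t)) by (apply Nat.succ_inj; auto).
  apply to_nat_inj in H'. injection H' as -> H'. f_equal. auto.
Qed.

Lemma code_inj s p t q : code s p = code t q -> s = t /\ p = q.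
Proof. unfold code. intros H. apply to_nat_inj in H. inversion H as [[H0 H1]]. subst q. split; auto. apply encl_inj; auto. Qed.

Definition kids (d m : nat) (P : list nat -> bool) (s : list nat) : list nat :=
  if Nat.ltb (length s) d && P s then seq 0 m else nil.

Fixpoint Tm (d m : nat) (P : list nat -> bool) (phi : form) (s : list nat) : term :=
  match phi with
  | Var p => TV (code s p)
  | And a b => TMn (Tm d m P a s) (Tm d m P b s)
  | Or a b => TMx (Tm d m P a s) (Tm d m P b s)
  | Prod a b => TMx TZ (TPl (TPl (Tm d m P a s) (Tm d m P b s)) (TNg TO))
  | Imp a b => TMn TO (TPl (TPl TO (TNg (Tm d m P a s))) (Tm d m P b s))
  | Bot => TZ
  | Top => TO
  | Box a => foldMn (map (fun i => Tm d m P a (i :: s)) (kids d m P s))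
  | Dia a => foldMx (map (fun i => Tm d m P a (i :: s)) (kids d m P s))
  end.

Definition RP (d m : nat) (P : list nat -> bool) (s t : list nat) : Prop :=
  exists i, In i (kids d m P s) /\ t = i :: s.

Lemma bridge d m P x phi : forall s,
  eval (RP d m P) (fun p s => x (code s p)) phi s = teval (Tm d m P phi s) x.
Proof.
  induction phi; intro s; simpl; auto;
    try (rewrite IHphi1, IHphi2; unfold luk_prod, luk_imp, Rminus; reflexivity).
  - rewrite teval_foldMn, map_map. apply inf01_list. intros y. rewrite in_map_iff. split.
    + intros [w [[i [Hi ->]] ->]]. exists i. rewrite IHphi. auto.
    + intros [i [<- Hi]]. exists (i :: s). rewrite IHphi. split; auto. exists i; auto.
  - rewrite teval_foldMx, map_map. apply sup01_list. intros y. rewrite in_map_iff. split.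
    + intros [w [[i [Hi ->]] ->]]. exists i. rewrite IHphi. auto.
    + intros [i [<- Hi]]. exists (i :: s). rewrite IHphi. split; auto. exists i; auto.
Qed.

Fixpoint md (phi : form) : nat :=
  match phi with
  | Var _ | Bot | Top => 0%nat
  | And a b | Or a b | Prod a b | Imp a b => Nat.max (md a) (md b)
  | Box a | Dia a => S (md a)
  end.

Fixpoint fsize (phi : form) : nat :=
  match phi with
  | Var _ | Bot | Top => 1%nat
  | And a b | Or a b | Prod a b | Imp a b => S (fsize a + fsize b)
  | Box a | Dia a => S (fsize a)
  end.

Fixpoint subf (phi : form) : list form :=
  match phi with
  | Var _ | Bot | Top => phi :: nil
  | And a b | Or a b | Prod a b | Imp a b => phi :: subf a ++ subf b
  | Box a | Dia a => phi :: subf a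
  end.

Definition closedL (L : list form) (phi : form) : Prop :=
  forall psi, In psi (subf phi) -> In psi L.

Lemma fold_min_ge l b : (forall y, In y l -> b <= y) -> b <= 1 -> b <= fold_right Rmin 1 l.
Proof. induction l; simpl; intros H H1; auto. apply Rmin_glb; auto. Qed.
Lemma fold_min_le l y : In y l -> fold_right Rmin 1 l <= y.
Proof. induction l; simpl; intros []; subst. apply Rmin_l. eapply Rle_trans; [apply Rmin_r|auto]. Qed.
Lemma fold_max_le l b : (forall y, In y l -> y <= b) -> 0 <= b -> fold_right Rmax 0 l <= b.
Proof. induction l; simpl; intros H H1; auto. apply Rmax_lub; auto. Qed.
Lemma fold_max_ge l y : In y l -> y <= fold_right Rmax 0 l.
Proof. induction l; simpl; intros []; subst. apply Rmax_l. eapply Rle_trans; [auto|apply Rmax_r]. Qed.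
Lemma fold_min_le1 l : fold_right Rmin 1 l <= 1.
Proof. induction l; simpl. lra. eapply Rle_trans; [apply Rmin_r|auto]. Qed.

Lemma prod_help a b c d : Rabs ((a + b + Ropp 1) - (c + d - 1)) <= Rabs (a - c) + Rabs (b - d).
Proof. unfold Rabs; repeat destruct Rcase_abs; lra. Qed.
Lemma imp_help a b c d : Rabs ((1 + Ropp a + b) - (1 - c + d)) <= Rabs (a - c) + Rabs (b - d).
Proof. unfold Rabs; repeat destruct Rcase_abs; lra. Qed.

Lemma approx {W : Type} (Rel : W -> W -> Prop) (e : nat -> W -> R) (L : list form) (d : nat) eps
  (om : list nat -> W) (P : list nat -> bool) (x : nat -> R) :
  (forall p w, 0 <= e p w <= 1) -> 0 <= eps ->
  (forall s i, (exists u, Rel (om s) u) -> (i < length L)%nat -> Rel (om s) (om (i :: s))) ->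
  (forall s i psi, (exists u, Rel (om s) u) -> nth_error L i = Some (Box psi) ->
      eval Rel e psi (om (i :: s)) <= eval Rel e (Box psi) (om s) + eps) ->
  (forall s i psi, (exists u, Rel (om s) u) -> nth_error L i = Some (Dia psi) ->
      eval Rel e (Dia psi) (om s) - eps <= eval Rel e psi (om (i :: s))) ->
  (forall s, P s = true <-> exists u, Rel (om s) u) ->
  (forall s p, x (code s p) = e p (om s)) ->
  forall phi s, closedL L phi -> (md phi + length s <= d)%nat ->
    Rabs (teval (Tm d (length L) P phi s) x - eval Rel e phi (om s)) <= INR (fsize phi) * eps.
Proof.
  intros He Heps H1 H2 H3 HP Hx.
  assert (Hr := eval_range W Rel e He).
  induction phi; intros s Hc Hd; cbn [Tm teval eval fsize md] in *;
  try (assert (Hc1 : closedL L phi1) by (intros q Hq; apply Hc; simpl; right; apply in_or_app; auto);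
       assert (Hc2 : closedL L phi2) by (intros q Hq; apply Hc; simpl; right; apply in_or_app; auto);
       specialize (IHphi1 s Hc1 ltac:(lia)); specialize (IHphi2 s Hc2 ltac:(lia));
       rewrite S_INR, plus_INR).
  - rewrite Hx, Rminus_diag, Rabs_R0. simpl. lra.
  - eapply Rle_trans. apply Rmin_lip. lra.
  - eapply Rle_trans. apply Rmax_lip. lra.
  - unfold luk_prod. eapply Rle_trans. apply Rmax_lip. rewrite Rminus_diag, Rabs_R0.
    pose proof (prod_help (teval (Tm d (length L) P phi1 s) x) (teval (Tm d (length L) P phi2 s) x)
      (eval Rel e phi1 (om s)) (eval Rel e phi2 (om s))). lra.
  - unfold luk_imp. eapply Rle_trans. apply Rmin_lip. rewrite Rminus_diag, Rabs_R0.
    pose proof (imp_help (teval (Tm d (length L) P phi1 s) x) (teval (Tm d (length L) P phi2 s) x)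
      (eval Rel e phi1 (om s)) (eval Rel e phi2 (om s))). lra.
  - rewrite Rminus_diag, Rabs_R0. simpl. lra.
  - rewrite Rminus_diag, Rabs_R0. simpl. lra.
  -
    assert (Hc1 : closedL L phi) by (intros q Hq; apply Hc; simpl; right; auto).
    assert (IH : forall i, Rabs (teval (Tm d (length L) P phi (i :: s)) x - eval Rel e phi (om (i :: s)))
                 <= INR (fsize phi) * eps) by (intro i; apply IHphi; auto; simpl; lia).
    rewrite teval_foldMn, map_map, S_INR.
    set (B := inf01 (fun y => exists w, Rel (om s) w /\ y = eval Rel e phi w)).
    assert (HB1 : B <= 1) by (apply (inf01_le1 _ 0); intros y [w [_ ->]]; apply Hr).
    unfold kids. destruct (classic (exists u, Rel (om s) u)) as [Ha|Ha].
    + assert (P s = true) as -> by (apply HP; auto).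
      assert (Nat.ltb (length s) d = true) as -> by (apply Nat.ltb_lt; lia). simpl.
      assert (Hi : In (Box phi) L) by (apply Hc; simpl; auto).
      destruct (In_nth_error _ _ Hi) as [i0 Hi0].
      assert (Hi0m : (i0 < length L)%nat) by (apply nth_error_Some; congruence).
      apply Rabs_le_between. split.
      * match goal with |- _ <= ?T - _ => assert (HT : B - INR (fsize phi) * eps <= T) end.
        { apply fold_min_ge. intros y Hy. apply in_map_iff in Hy. destruct Hy as [i [<- Hi']].
          apply in_seq in Hi'. specialize (IH i). apply Rabs_le_between in IH.
          assert (B <= eval Rel e phi (om (i :: s))).
          { apply (inf01_lb _ 0). intros y [w [_ ->]]; apply Hr. exists (om (i :: s)). split; auto. apply H1; auto. lia. }
          lra. pose proof (pos_INR (fsize phi)). nra. }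
        nra.
      * match goal with |- ?T - _ <= _ => assert (HT : T <= teval (Tm d (length L) P phi (i0 :: s)) x) end.
        { apply fold_min_le. apply in_map_iff. exists i0. split; [reflexivity|]. apply in_seq; lia. }
        specialize (IH i0). apply Rabs_le_between in IH. specialize (H2 s i0 phi Ha Hi0). simpl in H2.
        fold B in H2. nra.
    + rewrite andb_comm. assert (P s = false) as ->.
      { destruct (P s) eqn:E; auto. exfalso. apply Ha, HP, E. }
      simpl. assert (B = 1) as ->.
      { unfold B. rewrite (inf01_list _ nil). auto. intros y; split; [|intros []].
        intros [w [Hw _]]. apply Ha. eauto. }
      rewrite Rminus_diag, Rabs_R0. pose proof (pos_INR (fsize phi)). nra.
  -
    assert (Hc1 : closedL L phi) by (intros q Hq; apply Hc; simpl; right; auto).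
    assert (IH : forall i, Rabs (teval (Tm d (length L) P phi (i :: s)) x - eval Rel e phi (om (i :: s)))
                 <= INR (fsize phi) * eps) by (intro i; apply IHphi; auto; simpl; lia).
    rewrite teval_foldMx, map_map, S_INR.
    set (B := sup01 (fun y => exists w, Rel (om s) w /\ y = eval Rel e phi w)).
    assert (HB1 : 0 <= B) by (apply (sup01_ge0 _ 1); intros y [w [_ ->]]; apply Hr).
    unfold kids. destruct (classic (exists u, Rel (om s) u)) as [Ha|Ha].
    + assert (P s = true) as -> by (apply HP; auto).
      assert (Nat.ltb (length s) d = true) as -> by (apply Nat.ltb_lt; lia). simpl.
      assert (Hi : In (Dia phi) L) by (apply Hc; simpl; auto).
      destruct (In_nth_error _ _ Hi) as [i0 Hi0].
      assert (Hi0m : (i0 < length L)%nat) by (apply nth_error_Some; congruence).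
      apply Rabs_le_between. split.
      * match goal with |- _ <= ?T - _ => assert (HT : teval (Tm d (length L) P phi (i0 :: s)) x <= T) end.
        { apply fold_max_ge. apply in_map_iff. exists i0. split; [reflexivity|]. apply in_seq; lia. }
        specialize (IH i0). apply Rabs_le_between in IH. specialize (H3 s i0 phi Ha Hi0). simpl in H3.
        fold B in H3. nra.
      * match goal with |- ?T - _ <= _ => assert (HT : T <= B + INR (fsize phi) * eps) end.
        { apply fold_max_le. intros y Hy. apply in_map_iff in Hy. destruct Hy as [i [<- Hi']].
          apply in_seq in Hi'. specialize (IH i). apply Rabs_le_between in IH.
          assert (eval Rel e phi (om (i :: s)) <= B).
          { apply (sup01_ub _ 1). intros y [w [_ ->]]; apply Hr. exists (om (i :: s)). split; auto. apply H1; auto. lia. }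
          lra. pose proof (pos_INR (fsize phi)). nra. }
        nra.
    + rewrite andb_comm. assert (P s = false) as ->.
      { destruct (P s) eqn:E; auto. exfalso. apply Ha, HP, E. }
      simpl. assert (B = 0) as ->.
      { unfold B. rewrite (sup01_list _ nil). auto. intros y; split; [|intros []].
        intros [w [Hw _]]. apply Ha. eauto. }
      rewrite Rminus_diag, Rabs_R0. pose proof (pos_INR (fsize phi)). nra.
Qed.

Lemma construct {W : Type} (Rel : W -> W -> Prop) (e : nat -> W -> R) (L : list form) eps (v : W) :
  (forall p w, 0 <= e p w <= 1) -> 0 < eps ->
  exists (om : list nat -> W) (P : list nat -> bool) (x : nat -> R),
  om nil = v /\
  (forall s i, (exists u, Rel (om s) u) -> (i < length L)%nat -> Rel (om s) (om (i :: s))) /\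
  (forall s i psi, (exists u, Rel (om s) u) -> nth_error L i = Some (Box psi) ->
      eval Rel e psi (om (i :: s)) <= eval Rel e (Box psi) (om s) + eps) /\
  (forall s i psi, (exists u, Rel (om s) u) -> nth_error L i = Some (Dia psi) ->
      eval Rel e (Dia psi) (om s) - eps <= eval Rel e psi (om (i :: s))) /\
  (forall s, P s = true <-> exists u, Rel (om s) u) /\
  (forall s p, x (code s p) = e p (om s)) /\
  (forall i, 0 <= x i <= 1).
Proof.
  intros He Heps.
  assert (Hr := eval_range W Rel e He).
  assert (Hw : forall w i, exists u, (exists u0, Rel w u0) -> Rel w u /\
     (forall psi, nth_error L i = Some (Box psi) -> eval Rel e psi u <= eval Rel e (Box psi) w + eps) /\
     (forall psi, nth_error L i = Some (Dia psi) -> eval Rel e (Dia psi) w - eps <= eval Rel e psi u)).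
  { intros w i. destruct (classic (exists u0, Rel w u0)) as [[u0 Hu0]|Hn]; [|exists w; intro; contradiction].
    destruct (nth_error L i) as [f|] eqn:E; [destruct f|];
      try (exists u0; intros _; split; [auto|split; intros; discriminate]).
    - destruct (inf01_approx (fun y => exists w', Rel w w' /\ y = eval Rel e f w') 0 eps)
        as [Hgt|[y [[u [Hu ->]] Hy]]]; auto.
      + intros y [w' [_ ->]]; apply Hr.
      + exists u0. intros _. split; auto. split; intros psi Hp; [|discriminate].
        injection Hp as <-. simpl. pose proof (Hr f u0). lra.
      + exists u. intros _. split; auto. split; intros psi Hp; [|discriminate].
        injection Hp as <-. simpl. lra.
    - destruct (sup01_approx (fun y => exists w', Rel w w' /\ y = eval Rel e f w') 1 eps)
        as [Hgt|[y [[u [Hu ->]] Hy]]]; auto.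
      + intros y [w' [_ ->]]; apply Hr.
      + exists u0. intros _. split; auto. split; intros psi Hp; [discriminate|].
        injection Hp as <-. simpl. pose proof (Hr f u0). lra.
      + exists u. intros _. split; auto. split; intros psi Hp; [discriminate|].
        injection Hp as <-. simpl. lra. }
  assert (Hwit : exists wit : W -> nat -> W, forall w i, (exists u0, Rel w u0) -> Rel w (wit w i) /\
     (forall psi, nth_error L i = Some (Box psi) -> eval Rel e psi (wit w i) <= eval Rel e (Box psi) w + eps) /\
     (forall psi, nth_error L i = Some (Dia psi) -> eval Rel e (Dia psi) w - eps <= eval Rel e psi (wit w i))).
  { exists (fun w i => proj1_sig (constructive_indefinite_description _ (Hw w i))).
    intros w i. destruct (constructive_indefinite_description _ (Hw w i)); simpl; auto. }
  destruct Hwit as [wit Hwit].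
  set (om := fix om (s : list nat) : W := match s with nil => v | i :: s' => wit (om s') i end).
  exists om.
  exists (fun s => if excluded_middle_informative (exists u, Rel (om s) u) then true else false).
  exists (fun i => match excluded_middle_informative (exists sp : list nat * nat, code (fst sp) (snd sp) = i) with
           | left H => e (snd (proj1_sig (constructive_indefinite_description _ H)))
                         (om (fst (proj1_sig (constructive_indefinite_description _ H))))
           | right _ => 0 end).
  split; [reflexivity|]. split; [|split; [|split; [|split; [|split]]]].
  - intros s i Ha _. apply (Hwit (om s) i Ha).
  - intros s i psi Ha Hi. apply (Hwit (om s) i Ha); auto.
  - intros s i psi Ha Hi. apply (Hwit (om s) i Ha); auto.
  - intros s. destruct excluded_middle_informative; split; auto; discriminate.
  - intros s p. destruct excluded_middle_informative as [H|H].
    + destruct (constructive_indefinite_description _ H) as [[s' p'] Hsp]; simpl in *.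
      apply code_inj in Hsp. destruct Hsp as [-> ->]. reflexivity.
    + exfalso; apply H; exists (s, p); auto.
  - intros i. destruct excluded_middle_informative. apply He. lra.
Qed.

Definition updP (P : list nat -> bool) (a : list nat) (b : bool) : list nat -> bool :=
  fun t => if list_eq_dec Nat.eq_dec t a then b else P t.

Lemma pigeon (D : list (list nat)) : forall (Q : nat -> (list nat -> bool) -> Prop),
  (forall P P' k, (forall t, In t D -> P t = P' t) -> Q k P -> Q k P') ->
  (forall k k' P, (k <= k')%nat -> Q k' P -> Q k P) ->
  (forall k, exists P, Q k P) -> exists P, forall k, Q k P.
Proof.
  induction D as [|a D IH]; intros Q Hresp Hmon Hall.
  - destruct (Hall 0%nat) as [P0 _]. exists P0. intro k. destruct (Hall k) as [P HP].
    eapply Hresp; [|apply HP]. intros t [].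
  - set (Qb := fun b k P => Q k (updP P a b)).
    assert (Hrb : forall b P P' k, (forall t, In t D -> P t = P' t) -> Qb b k P -> Qb b k P').
    { intros b P P' k Hag. unfold Qb. apply Hresp. intros t Ht. unfold updP.
      destruct list_eq_dec; auto. destruct Ht; [congruence|auto]. }
    assert (Hmb : forall b k k' P, (k <= k')%nat -> Qb b k' P -> Qb b k P).
    { intros. unfold Qb in *. eapply Hmon; eauto. }
    assert (Hupd : forall P k, Q k P -> Qb (P a) k P).
    { intros P k HQ. unfold Qb. eapply Hresp; [|apply HQ]. intros t _. unfold updP.
      destruct list_eq_dec; subst; auto. }
    destruct (classic (forall k, exists P, Qb true k P)) as [Ht|Hn].
    + destruct (IH (Qb true) (Hrb true) (Hmb true) Ht) as [P HP]. exists (updP P a true). exact HP.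
    + apply not_all_ex_not in Hn. destruct Hn as [k0 Hk0].
      assert (Hf : forall k, exists P, Qb false k P).
      { intros k. destruct (Hall (Nat.max k k0)) as [P HP]. exists P.
        assert (Hq := Hupd P _ HP).
        destruct (P a) eqn:E.
        - exfalso. apply Hk0. exists P. eapply Hmb; [|apply Hq]. lia.
        - eapply Hmb; [|apply Hq]. lia. }
      destruct (IH (Qb false) (Hrb false) (Hmb false) Hf) as [P HP]. exists (updP P a false). exact HP.
Qed.

Fixpoint allnodes (m k : nat) : list (list nat) :=
  match k with
  | O => nil :: nil
  | S k' => nil :: flat_map (fun t => map (fun i => i :: t) (seq 0 m)) (allnodes m k')
  end.

Lemma allnodes_spec m k t : (length t <= k)%nat -> List.Forall (fun j => (j < m)%nat) t -> In t (allnodes m k).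
Proof.
  revert t; induction k; intros t Hl Hf; simpl.
  - destruct t; simpl in *; auto. lia.
  - destruct t as [|i t]; [left; auto|right]. inversion Hf; subst. simpl in Hl.
    apply in_flat_map. exists t. split. apply IHk; auto. lia. apply in_map_iff. exists i. split; auto.
    apply in_seq. lia.
Qed.

Lemma Tm_agree d m P P' : (forall t, (length t < d)%nat -> List.Forall (fun j => (j < m)%nat) t -> P t = P' t) ->
  forall phi s, List.Forall (fun j => (j < m)%nat) s -> Tm d m P phi s = Tm d m P' phi s.
Proof.
  intros Hag phi. induction phi; intros s Hs; simpl; try (f_equal; auto; fail);
  try (rewrite IHphi1, IHphi2; auto).
  - assert (Hk : kids d m P s = kids d m P' s).
    { unfold kids. destruct (Nat.ltb_spec (length s) d); simpl; auto. rewrite Hag; auto. }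
    rewrite Hk. f_equal. apply map_ext_in. intros i Hi. apply IHphi. constructor; auto.
    unfold kids in Hi. destruct (_ && _); [apply in_seq in Hi; lia|destruct Hi].
  - assert (Hk : kids d m P s = kids d m P' s).
    { unfold kids. destruct (Nat.ltb_spec (length s) d); simpl; auto. rewrite Hag; auto. }
    rewrite Hk. f_equal. apply map_ext_in. intros i Hi. apply IHphi. constructor; auto.
    unfold kids in Hi. destruct (_ && _); [apply in_seq in Hi; lia|destruct Hi].
Qed.

Definition Gt d m P (Gamma : list form) := foldMn (map (fun g => Tm d m P g nil) Gamma).

Lemma max_in l i : In i l -> (i <= fold_right Nat.max 0 l)%nat.
Proof. induction l; simpl; intros []; subst; [lia|]. specialize (IHl H). lia. Qed.

Lemma sum_in l chi : In chi l -> (fsize chi <= fold_right Nat.add 0 (map fsize l))%nat.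
Proof. induction l; simpl; intros []; subst; [lia|]. specialize (IHl H). lia. Qed.

Lemma hard Gamma phi : entails K_omegaL Gamma phi -> entails K_L Gamma phi.
Proof.
  intros Hent W Rel e He v HG.
  assert (Hr := eval_range W Rel e He).
  apply NNPP; intro Hne.
  set (c := eval Rel e phi v). assert (Hc : c < 1) by (pose proof (Hr phi v); unfold c in *; lra).
  set (c' := (c + 1) / 2).
  set (Fs := phi :: Gamma).
  set (L := flat_map subf Fs). set (m := length L).
  set (d := fold_right Nat.max 0%nat (map md Fs)).
  set (Cs := INR (fold_right Nat.add 0%nat (map fsize Fs))).
  assert (HmdF : forall chi, In chi Fs -> (md chi <= d)%nat).
  { intros chi Hchi. unfold d. apply max_in. apply in_map; auto. }
  assert (HclF : forall chi, In chi Fs -> closedL L chi).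
  { intros chi Hchi psi Hpsi. unfold L. apply in_flat_map. eauto. }
  assert (HszF : forall chi, In chi Fs -> INR (fsize chi) <= Cs).
  { intros chi Hchi. unfold Cs. apply le_INR. apply sum_in. auto. }
  assert (HCs : 0 <= Cs) by apply pos_INR.
  pose (Q := fun k P => exists x, cube (vars (Gt d m P Gamma) ++ vars (Tm d m P phi nil)) x /\
        1 - / (INR k + 1) <= Rmin (teval (Gt d m P Gamma) x) (1 + c' - teval (Tm d m P phi nil) x)).
  assert (Hstep1 : forall k, exists P, Q k P).
  { intro k. set (delta := / (INR k + 1)).
    assert (Hdel : 0 < delta) by (apply Rinv_0_lt_compat; pose proof (pos_INR k); lra).
    set (eps := delta / (Cs + 1)).
    assert (Heps : 0 < eps) by (apply Rdiv_lt_0_compat; lra).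
    destruct (construct Rel e L eps v He Heps) as (om & P & x & Hv & H1 & H2 & H3 & HP & Hx & Hx01).
    exists P, x. fold delta. split. intros i _; apply Hx01.
    assert (Hap : forall chi, In chi Fs -> Rabs (teval (Tm d m P chi nil) x - eval Rel e chi v) < delta).
    { intros chi Hchi. rewrite <- Hv. eapply Rle_lt_trans.
      apply (approx Rel e L d eps om P x He); auto. lra. simpl. rewrite Nat.add_0_r; auto.
      apply Rle_lt_trans with (Cs * eps). apply Rmult_le_compat_r. lra. auto.
      unfold eps. apply Rlt_le_trans with ((Cs+1) * (delta / (Cs+1))).
      apply Rmult_lt_compat_r; [apply Rdiv_lt_0_compat; lra | lra]. right; field; lra. }
    apply Rmin_glb.
    - unfold Gt. rewrite teval_foldMn. apply fold_min_ge; [|lra].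
      intros y Hy. apply in_map_iff in Hy. destruct Hy as [t [<- Ht]].
      apply in_map_iff in Ht. destruct Ht as [g [<- Hg]].
      assert (Hgv := HG g Hg). assert (Hin : In g Fs) by (right; auto).
      specialize (Hap g Hin). apply Rabs_def2 in Hap. lra.
    - assert (Hin : In phi Fs) by (left; auto). specialize (Hap phi Hin). apply Rabs_def2 in Hap.
      fold c in Hap. unfold c'. lra. }
  assert (Hresp : forall P P' k, (forall t, In t (allnodes m d) -> P t = P' t) -> Q k P -> Q k P').
  { intros P P' k Hag [x [Hx Hf]].
    assert (Hag' : forall t, (length t < d)%nat -> List.Forall (fun j => (j < m)%nat) t -> P t = P' t).
    { intros t Ht Hf'. apply Hag. apply allnodes_spec; auto. lia. }
    assert (E1 : Gt d m P Gamma = Gt d m P' Gamma).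
    { unfold Gt. f_equal. apply map_ext. intro g. apply Tm_agree; auto. }
    assert (E2 : Tm d m P phi nil = Tm d m P' phi nil) by (apply Tm_agree; auto).
    exists x. rewrite <- E1, <- E2. auto. }
  assert (Hmon : forall k k' P, (k <= k')%nat -> Q k' P -> Q k P).
  { intros k k' P Hk [x [Hx Hf]]. exists x. split; auto.
    assert (/ (INR k' + 1) <= / (INR k + 1)).
    { apply Rinv_le_contravar. pose proof (pos_INR k); lra. apply le_INR in Hk. lra. }
    lra. }
  destruct (pigeon _ Q Hresp Hmon Hstep1) as [P HPk].
  set (G := Gt d m P Gamma). set (F := Tm d m P phi nil).
  destruct (term_lip G) as [K1 [HK1 L1]]. destruct (term_lip F) as [K2 [HK2 L2]].
  destruct (evt_sup (vars G ++ vars F) (fun x => Rmin (teval G x) (1 + c' - teval F x)) (K1 + K2))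
    as [xs [Hcube Hf1]].
  { lra. }
  { intros x y. eapply Rle_trans. apply Rmin_lip. rewrite sumabs_app.
    specialize (L1 x y); specialize (L2 x y).
    pose proof (sumabs_ge0 (vars G) x y); pose proof (sumabs_ge0 (vars F) x y).
    replace (1 + c' - teval F x - (1 + c' - teval F y)) with (- (teval F x - teval F y)) by ring.
    rewrite Rabs_Ropp. nra. }
  { exact HPk. }
  assert (HG1 : 1 <= teval G xs) by (eapply Rle_trans; [apply Hf1|apply Rmin_l]).
  assert (HF1 : teval F xs <= c') by (pose proof (Rmin_r (teval G xs) (1 + c' - teval F xs)); lra).
  set (xc := fun i => Rmax 0 (Rmin 1 (xs i))).
  assert (Hxc : forall i, In i (vars G ++ vars F) -> xc i = xs i).
  { intros i Hi. specialize (Hcube i Hi). unfold xc. rewrite Rmin_right by lra. apply Rmax_right. lra. }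
  assert (HGc : teval G xc = teval G xs) by (apply teval_ext; intros; apply Hxc, in_or_app; auto).
  assert (HFc : teval F xc = teval F xs) by (apply teval_ext; intros; apply Hxc, in_or_app; auto).
  assert (Hxc01 : forall i, 0 <= xc i <= 1).
  { intros i. unfold xc. unfold Rmax, Rmin. repeat destruct Rle_dec; lra. }
  set (N := S (fold_right Nat.max 0%nat (vars G ++ vars F))).
  assert (HN : forall i, In i (vars G ++ vars F) -> (i < N)%nat) by (intros i Hi; apply max_in in Hi; unfold N; lia).
  assert (HNG : forall i, In i (vars G) -> (i < N)%nat) by (intros; apply HN, in_or_app; auto).
  assert (HNF : forall i, In i (vars F) -> (i < N)%nat) by (intros; apply HN, in_or_app; auto).
  destruct (lin_correct N xc G HNG) as [AG [BG CG]].
  destruct (lin_correct N xc F HNF) as [AF [BF CF]].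
  set (cube_cs := flat_map (fun i => mkc N (fvar i) xc :: mkc N (fsub (fconst 1) (fvar i)) xc :: nil) (seq 0 N)).
  set (cs := (fsub (lin N xc G) (fconst 1), true) :: (fsub (fconst 1) (lin N xc F), false) ::
             conds N xc G ++ conds N xc F ++ cube_cs).
  assert (HGle1 : teval G xc <= 1) by (unfold G, Gt; rewrite teval_foldMn; apply fold_min_le1).
  assert (Hcs : forall c0, In c0 cs -> holds N c0 xc).
  { intros c0 Hc0. destruct Hc0 as [<-|[<-|Hc0]].
    - unfold holds; simpl. rewrite feval_sub, feval_const, Q2R_1, AG. lra.
    - unfold holds; simpl. rewrite feval_sub, feval_const, Q2R_1, AF. unfold c' in *. lra.
    - apply in_app_or in Hc0. destruct Hc0 as [Hc0|Hc0]; auto.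
      apply in_app_or in Hc0. destruct Hc0 as [Hc0|Hc0]; auto.
      unfold cube_cs in Hc0. apply in_flat_map in Hc0. destruct Hc0 as [i [Hi Hc0]].
      apply in_seq in Hi. destruct Hc0 as [<-|[<-|[]]]; apply mkc_holds.
      + rewrite feval_var by lia. apply Hxc01.
      + rewrite feval_sub, feval_const, Q2R_1, feval_var by lia. pose proof (Hxc01 i); lra. }
  destruct (ratsol N cs xc Hcs) as [x' [Hrat Hh]].
  assert (HcG : forall c0, In c0 (conds N xc G) -> holds N c0 x') by (intros; apply Hh; right; right; apply in_or_app; auto).
  assert (HcF : forall c0, In c0 (conds N xc F) -> holds N c0 x') by (intros; apply Hh; right; right; apply in_or_app; right; apply in_or_app; auto).
  assert (HG' : teval G x' = 1).
  { rewrite (CG x' HcG). specialize (Hh _ (or_introl eq_refl)). unfold holds in Hh; simpl in Hh.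
    rewrite feval_sub, feval_const, Q2R_1 in Hh. lra. }
  assert (HF' : teval F x' < 1).
  { rewrite (CF x' HcF). specialize (Hh _ (or_intror (or_introl eq_refl))). unfold holds in Hh; simpl in Hh.
    rewrite feval_sub, feval_const, Q2R_1 in Hh. lra. }
  assert (Hx'01 : forall i, (i < N)%nat -> 0 <= x' i <= 1).
  { intros i Hi.
    assert (Hin : forall c0, In c0 (mkc N (fvar i) xc :: mkc N (fsub (fconst 1) (fvar i)) xc :: nil) -> In c0 cs).
    { intros c0 Hc0. right; right. apply in_or_app; right. apply in_or_app; right.
      unfold cube_cs. apply in_flat_map. exists i. split; auto. apply in_seq; lia. }
    pose proof (mkc_nonneg _ _ _ _ (Hh _ (Hin _ (or_introl eq_refl)))) as A1.
    pose proof (mkc_nonneg _ _ _ _ (Hh _ (Hin _ (or_intror (or_introl eq_refl))))) as A2.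
    rewrite feval_var in A1 by auto. rewrite feval_sub, feval_const, Q2R_1, feval_var in A2 by auto. lra. }
  destruct (common_den N x') as [nn [Hnn Hmv]].
  { intros i Hi. split; auto. }
  set (x'' := fun i => if Nat.ltb i N then x' i else 0).
  assert (HG'' : teval G x'' = 1).
  { rewrite <- HG'. apply teval_ext. intros i Hi. unfold x''. rewrite (proj2 (Nat.ltb_lt i N)); auto. }
  assert (HF'' : teval F x'' < 1).
  { eapply Rle_lt_trans; [|apply HF']. right. apply teval_ext. intros i Hi. unfold x''. rewrite (proj2 (Nat.ltb_lt i N)); auto. }
  assert (HK : K_omegaL (list nat) (RP d m P) (fun p s => x'' (code s p))).
  { exists nn. split; auto. intros p w. unfold x''. destruct (Nat.ltb_spec (code w p) N).
    - apply Hmv; auto.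
    - exists 0%nat. split. lia. simpl. unfold Rdiv. ring. }
  assert (Hrange : forall p w, 0 <= x'' (code w p) <= 1).
  { intros p w. destruct HK as [n0 [Hn0 Hm0]]. eapply inMV_range; eauto. }
  specialize (Hent (list nat) (RP d m P) (fun p s => x'' (code s p)) HK nil).
  assert (Hphi : eval (RP d m P) (fun p s => x'' (code s p)) phi nil = 1).
  { apply Hent. intros g Hg. rewrite bridge.
    pose proof (eval_range _ (RP d m P) _ Hrange g nil) as Hrg. rewrite bridge in Hrg.
    assert (teval G x'' <= teval (Tm d m P g nil) x'').
    { unfold G, Gt. rewrite teval_foldMn. apply fold_min_le. rewrite map_map. apply in_map_iff. exists g; auto. }
    lra. }
  rewrite bridge in Hphi. fold F in Hphi. lra.
Qed.


Theorem corollary4p7 :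
  (forall (Gamma : list form) (phi : form),
      entails K_omegaL Gamma phi <-> entails K_L Gamma phi) /\
  (forall (Gamma : list form) (phi : form),
      entails K4_L Gamma phi -> entails K4_omegaL Gamma phi) /\
  (exists (Gamma : list form) (phi : form),
      entails K4_omegaL Gamma phi /\ ~ entails K4_L Gamma phi).
Proof.
  split; [|split].
  - intros Gamma phi. split.
    + apply hard.
    + intros H W Rel e [n [Hn He]] v Hv. apply H; auto. intros p w. eapply inMV_range; eauto.
  - intros Gamma phi H W Rel e [[n [Hn He]] Htr] v Hv. apply H; auto. split; auto.
    intros p w. eapply inMV_range; eauto.
  - exists G3, F3. split. apply part3a. apply part3b.
Qed.
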